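(* Assume (A1)–(A4) and $\eta_x,\eta_z>0$ (see context). Then for all $K\ge1$ there exists $j\in[K]$ such that $$\pi^j\le\sqrt{\frac{2(\Phi^1-\hat\Phi)}{\theta}\left(1+\frac{2(\theta+\tau_z)^2}{K\eta_z\rho}\right)}.$$
   Context: Let $T\ge1$, $[T]=\{1,\dots,T\}$; for $t\in[T]$: $X_t\subseteq\mathbb{R}^{n_t}$, $f_t:\mathbb{R}^{n_t}\to\mathbb{R}$, $A_t\in\mathbb{R}^{m\times n_t}$; $b\in\mathbb{R}^m$; $X=\prod_tX_t$, $A=[A_1\cdots A_T]$, $Ax=\sum_tA_tx_t$, $A_{\neq t}x_{\neq t}=\sum_{s\neq t}A_sx_s$; $\|w\|_M=\sqrt{w^\top Mw}$. Assumptions: (A1) $X_t$ nonempty compact; (A2) $f_t$ is $C^2$; (A3) $A$ full row rank; (A4) $\{x\in X:Ax=b\}\neq\emptyset$. Parameters $\rho,\theta,\tau_x,\tau_z>0$ with $\eta_x:=\frac{\tau_x}{4}-\frac{(T-1)\rho}{2}>0$, $\eta_z:=\frac{\tau_z}{4}-\frac{2(\theta+\tau_z)^2}{\rho}>0$. $\mathcal{L}(x,z,\lambda)=\sum_tf_t(x_t)+\frac{\theta}{2}\|z\|^2+\lambda^\top(Ax+z-b)+\frac{\rho}{2}\|Ax+z-b\|^2$. Jacobi scheme: given $x^0\in X$, $z^0,\lambda^0\in\mathbb{R}^m$, for $k\ge1$: (i) for each $t$, $x_t^k$ is a local minimizer, computed by a solver warm-started at $x_t^{k-1}$ (so that its subproblem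 objective does not exceed that of $x_t^{k-1}$), of $\min_{x_t\in X_t}f_t(x_t)+(\lambda^{k-1})^\top A_tx_t+\frac{\rho}{2}\|A_tx_t+A_{\neq t}x^{k-1}_{\neq t}+z^{k-1}-b\|^2+\frac{\tau_x}{2}\|x_t-x_t^{k-1}\|^2_{A_t^\top A_t}$; (ii) $z^k=(\tau_zz^{k-1}-\rho(Ax^k-b)-\lambda^{k-1})/(\tau_z+\rho+\theta)$; (iii) $\lambda^k=\lambda^{k-1}+\rho(Ax^k+z^k-b)$. $\Phi(x,z,\lambda,\hat x,\hat z)=\mathcal{L}(x,z,\lambda)+\frac{\tau_z}{4}\|z-\hat z\|^2+\sum_t\frac{\tau_x}{4}\|x_t-\hat x_t\|^2_{A_t^\top A_t}$; $\Phi^1=\Phi(x^1,z^1,\lambda^1,x^0,z^0)$; $\hat\Phi=\min_{x\in X}\sum_tf_t(x_t)$; $\pi^k=\|Ax^k-b\|$. *)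

(* Defs.v *)
From HB Require Import structures.
From mathcomp Require Import all_boot all_order all_algebra.
From mathcomp Require Import all_classical all_reals all_analysis.
Unset Printing Implicit Defensive.
Import Order.TTheory GRing.Theory Num.Theory.
Import numFieldNormedType.Exports.
Local Open Scope classical_set_scope.
Local Open Scope ring_scope.

Definition sqnorm {R : realType} {k : nat} (w : 'cV[R]_k) : R :=
  \sum_(i < k) (w i 0) ^+ 2.

Definition enorm {R : realType} {k : nat} (w : 'cV[R]_k) : R :=
  Num.sqrt (sqnorm w).

Definition dotv {R : realType} {k : nat} (u v : 'cV[R]_k) : R :=
  \sum_(i < k) u i 0 * v i 0.

Definition Ax {R : realType} {T m : nat} {n : 'I_T -> nat}
  (A : forall t : 'I_T, 'M[R]_(m, n t)) (x : forall t : 'I_T, 'cV[R]_(n t))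
  : 'cV[R]_m := \sum_(t < T) A t *m x t.

Definition Ax_neq {R : realType} {T m : nat} {n : 'I_T -> nat}
  (A : forall t : 'I_T, 'M[R]_(m, n t)) (x : forall t : 'I_T, 'cV[R]_(n t))
  (t : 'I_T) : 'cV[R]_m := \sum_(s < T | s != t) A s *m x s.

Definition ebasis {R : realType} {k : nat} (i : 'I_k) : 'cV[R]_k := delta_mx i 0.

Definition C2 {R : realType} {k : nat} (f : 'cV[R]_k -> R) : Prop :=
  continuous f /\
  (forall (i : 'I_k) (x : 'cV[R]_k), derivable f x (ebasis i)) /\
  (forall i : 'I_k, continuous (fun y => 'D_(ebasis i) f y)) /\
  (forall (i j : 'I_k) (x : 'cV[R]_k),
      derivable (fun y => 'D_(ebasis i) f y) x (ebasis j)) /\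
  (forall i j : 'I_k,
      continuous (fun y => 'D_(ebasis j) (fun u => 'D_(ebasis i) f u) y)).

Definition Lagr {R : realType} {T m : nat} {n : 'I_T -> nat}
  (f : forall t : 'I_T, 'cV[R]_(n t) -> R)
  (A : forall t : 'I_T, 'M[R]_(m, n t)) (b : 'cV[R]_m) (rho theta : R)
  (x : forall t : 'I_T, 'cV[R]_(n t)) (z lam : 'cV[R]_m) : R :=
  \sum_(t < T) f t (x t) + theta / 2 * sqnorm z
  + dotv lam (Ax A x + z - b) + rho / 2 * sqnorm (Ax A x + z - b).

(* Lyapunov function Phi(x,z,lambda,xhat,zhat);
   ||w||^2_{A_t^T A_t} = w^T A_t^T A_t w = ||A_t w||^2 *)
Definition Phi {R : realType} {T m : nat} {n : 'I_T -> nat}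
  (f : forall t : 'I_T, 'cV[R]_(n t) -> R)
  (A : forall t : 'I_T, 'M[R]_(m, n t)) (b : 'cV[R]_m)
  (rho theta tau_x tau_z : R)
  (x : forall t : 'I_T, 'cV[R]_(n t)) (z lam : 'cV[R]_m)
  (xh : forall t : 'I_T, 'cV[R]_(n t)) (zh : 'cV[R]_m) : R :=
  Lagr f A b rho theta x z lam + tau_z / 4 * sqnorm (z - zh)
  + \sum_(t < T) tau_x / 4 * sqnorm (A t *m (x t - xh t)).

(* objective of the t-th x-subproblem at iteration k, given previous
   iterates xp = x^{k-1}, zp = z^{k-1}, lp = lambda^{k-1} *)
Definition xsub {R : realType} {T m : nat} {n : 'I_T -> nat}
  (f : forall t : 'I_T, 'cV[R]_(n t) -> R)
  (A : forall t : 'I_T, 'M[R]_(m, n t)) (b : 'cV[R]_m) (rho tau_x : R)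
  (xp : forall t : 'I_T, 'cV[R]_(n t)) (zp lp : 'cV[R]_m)
  (t : 'I_T) (y : 'cV[R]_(n t)) : R :=
  f t y + dotv lp (A t *m y)
  + rho / 2 * sqnorm (A t *m y + Ax_neq A xp t + zp - b)
  + tau_x / 2 * sqnorm (A t *m (y - xp t)).

(* Main.v *)
Require Import Defs.
From HB Require Import structures.
From mathcomp Require Import all_boot all_order all_algebra.
From mathcomp Require Import all_classical all_reals all_analysis.
Import Order.TTheory GRing.Theory Num.Theory.
Import numFieldNormedType.Exports.
Local Open Scope classical_set_scope.
Local Open Scope ring_scope.
From mathcomp Require Import ring lra.
Definition gE {R : realFieldType} (rho theta tau_z z lam a b zh : R) : R :=
  theta / 2 * z ^+ 2 + lam * (a + z - b) + rho / 2 * (a + z - b) ^+ 2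
  + tau_z / 4 * (z - zh) ^+ 2.

Lemma e_ident {R : realFieldType} (r th tz a ap bb z zo zp lam lamp : R) :
  0 < r ->
  (tz + r + th) * zp = tz * z - r * (ap - bb) - lam ->
  lam = - (th * z) - tz * (z - zo) ->
  lamp = lam + r * (ap + zp - bb) ->
  (gE r th tz zp lamp ap bb z - gE r th tz z lam a bb zo - lam * (ap - a)
   - r * (a + z - bb) * (ap - a) - r / 2 * (ap - a) ^+ 2) * r
  = - (3 * tz / 4 + (th + r) / 2) * r * (zp - z) ^+ 2 - r * tz / 4 * (z - zo) ^+ 2
    + ((th + tz) * (zp - z) - tz * (z - zo)) ^+ 2.
Proof.
move=> r0 hz hl hl'.
have ha : ap = (tz * z - lam - (tz + r + th) * zp) / r + bb.
  rewrite hz; field; lra.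
rewrite hl' ha hl /gE; field; lra.
Qed.

Lemma lb_ident {R : realFieldType} (r th tz a bb z zo lam : R) :
  lam = - (th * z) - tz * (z - zo) ->
  gE r th tz z lam a bb zo - th / 2 * (a - bb) ^+ 2
  = (r - th - 2 * tz) / 2 * (a + z - bb) ^+ 2
    + tz * ((z - zo) / 2 - (a + z - bb)) ^+ 2.
Proof. by move=> ->; rewrite /gE; field. Qed.
Lemma hz_fact {R : realFieldType} (r th tz : R) :
  0 < r -> 0 < tz/4 - 2 * (th + tz) ^+ 2 / r -> 2 * (th + tz) ^+ 2 < r * tz / 4.
Proof.
move=> r0; rewrite subr_gt0 ltr_pdivrMr // => h; lra.
Qed.

Lemma rho_big {R : realFieldType} (r th tz : R) :
  0 < r -> 0 < th -> 0 < tz -> 0 < tz/4 - 2 * (th + tz) ^+ 2 / r -> th + 2 * tz <= r.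
Proof.
move=> r0 t0 z0 /(hz_fact _ _ _ r0) h.
have h1 : (th + tz) * tz <= (th + tz) ^+ 2 by rewrite expr2; apply: ler_wpM2l; lra.
have h2 : 8 * (th + tz) * tz < r * tz by lra.
have h3 : 8 * (th + tz) < r by rewrite -(ltr_pM2r z0).
lra.
Qed.

Lemma e_le0 {R : realFieldType} (r th tz a ap bb z zo zp lam lamp : R) :
  0 < r -> 0 < th -> 0 < tz -> 0 < tz/4 - 2 * (th + tz) ^+ 2 / r ->
  (tz + r + th) * zp = tz * z - r * (ap - bb) - lam ->
  lam = - (th * z) - tz * (z - zo) ->
  lamp = lam + r * (ap + zp - bb) ->
  gE r th tz zp lamp ap bb z - gE r th tz z lam a bb zo - lam * (ap - a)
   - r * (a + z - bb) * (ap - a) - r / 2 * (ap - a) ^+ 2 <= 0.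
Proof.
move=> r0 t0 z0 hz h1 h2 h3.
have := @e_ident _ r th tz a ap bb z zo zp lam lamp r0 h1 h2 h3.
set e := (X in X * r = _) => he.
have hf := hz_fact _ _ _ r0 hz.
set al := zp - z in he *; set be := z - zo in he *.
have hsq : ((th + tz) * al - tz * be) ^+ 2 <= 2 * (th + tz) ^+ 2 * al ^+ 2 + 2 * tz ^+ 2 * be ^+ 2.
  have := sqr_ge0 ((th + tz) * al + tz * be); rewrite !expr2; lra.
have ha : 0 <= al ^+ 2 := sqr_ge0 al.
have hb : 0 <= be ^+ 2 := sqr_ge0 be.
have htz : tz ^+ 2 <= (th + tz) ^+ 2 by rewrite !expr2; apply: ler_pM; lra.
have c1 : 0 <= (r * tz / 4 - 2 * (th + tz) ^+ 2) * al ^+ 2 by apply: mulr_ge0; lra.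
have c2 : 0 <= (r * tz / 4 - 2 * (th + tz) ^+ 2) * be ^+ 2 by apply: mulr_ge0; lra.
have c3 : 0 <= (r * (th + r)) * al ^+ 2 by apply: mulr_ge0 => //; apply: mulr_ge0; lra.
have c4 : 0 <= (r * tz) * al ^+ 2 by apply: mulr_ge0 => //; apply: mulr_ge0; lra.
have c5 : 0 <= ((th + tz) ^+ 2 - tz ^+ 2) * be ^+ 2 by apply: mulr_ge0; lra.
have : e * r <= 0 by rewrite he; lra.
by rewrite pmulr_lle0.
Qed.

Lemma lb_ineq {R : realFieldType} (r th tz a bb z zo lam : R) :
  0 < r -> 0 < th -> 0 < tz -> 0 < tz/4 - 2 * (th + tz) ^+ 2 / r ->
  lam = - (th * z) - tz * (z - zo) ->
  th / 2 * (a - bb) ^+ 2 <= gE r th tz z lam a bb zo.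
Proof.
move=> r0 t0 z0 hz hl; rewrite -subr_ge0 (@lb_ident _ r th tz a bb z zo lam hl).
have := rho_big _ _ _ r0 t0 z0 hz => hr.
apply: addr_ge0; last by apply: mulr_ge0; [lra | exact: sqr_ge0].
apply: mulr_ge0; [lra | exact: sqr_ge0].
Qed.

Lemma cs_sum {R : realFieldType} (T : nat) (d : 'I_T -> R) :
  (\sum_t d t) ^+ 2 <= T%:R * \sum_t d t ^+ 2.
Proof.
have e1 : (\sum_t d t) ^+ 2 = \sum_s \sum_t d s * d t.
  by rewrite expr2 mulr_suml; apply: eq_bigr => s _; rewrite mulr_sumr.
have e2 : \sum_s \sum_t (d s ^+ 2 + d t ^+ 2) / 2 = T%:R * \sum_t d t ^+ 2.
  under eq_bigr do under eq_bigr do rewrite mulrDl.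
  under eq_bigr do rewrite big_split /=.
  rewrite big_split /= exchange_big /= -big_split /=.
  rewrite sumr_const card_ord [RHS]mulr_natl; congr (_ *+ _).
  rewrite -big_split /=; apply: eq_bigr => t _; by field.
rewrite e1 -e2; apply: ler_sum => s _; apply: ler_sum => t _.
have := sqr_ge0 (d s - d t); rewrite !expr2; lra.
Qed.
Lemma per_i {R : realFieldType} (T : nat) (p q : 'I_T -> R)
  (r th tx tz z zo zp lam lamp bb : R) :
  0 < r -> 0 < th -> 0 < tz ->
  0 < tx / 4 - (T%:R - 1) * r / 2 ->
  0 < tz/4 - 2 * (th + tz) ^+ 2 / r ->
  (tz + r + th) * zp = tz * z - r * (\sum_t p t - bb) - lam ->
  lam = - (th * z) - tz * (z - zo) ->
  lamp = lam + r * (\sum_t p t + zp - bb) ->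
  \sum_t tx / 4 * (p t - q t) ^+ 2 + gE r th tz zp lamp (\sum_t p t) bb z
   + \sum_t (lam * q t + r / 2 * (q t + \sum_s q s - q t + z - bb) ^+ 2
             + tx / 2 * (q t - q t) ^+ 2)
  <= gE r th tz z lam (\sum_t q t) bb zo
   + \sum_t (lam * p t + r / 2 * (p t + \sum_s q s - q t + z - bb) ^+ 2
             + tx / 2 * (p t - q t) ^+ 2).
Proof.
move=> r0 t0 z0 hx hz h1 h2 h3.
set a := \sum_t q t; set ap := \sum_t p t.
set S := \sum_t (p t - q t) ^+ 2.
have hD : \sum_t (p t - q t) = ap - a by rewrite sumrB.
have hP : \sum_t (lam * p t + r / 2 * (p t + a - q t + z - bb) ^+ 2
             + tx / 2 * (p t - q t) ^+ 2)
  = \sum_t (lam * q t + r / 2 * (q t + a - q t + z - bb) ^+ 2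
             + tx / 2 * (q t - q t) ^+ 2)
    + (lam * (ap - a) + r * (a + z - bb) * (ap - a) + (r / 2 + tx / 2) * S).
  rewrite -hD /S !mulr_sumr -!big_split /=.
apply: eq_bigr => t _.
by field.
rewrite hP -mulr_sumr.
have cs := cs_sum _ (fun t => p t - q t); rewrite /= hD -/S in cs.
have he := @e_le0 _ r th tz a ap bb z zo zp lam lamp r0 t0 z0 hz h1 h2 h3.
have S0 : 0 <= S by apply: sumr_ge0 => t _; exact: sqr_ge0.
have c1 : 0 <= r / 2 * (T%:R * S - (ap - a) ^+ 2) by apply: mulr_ge0; lra.
have c2 : 0 <= (tx / 4 - (T%:R - 1) * r / 2) * S by apply: mulr_ge0; lra.
rewrite -/S.
move: hP cs he S0 c1 c2 hx. clear. move: (T%:R) => TT.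
move: (\sum_t _) => Q. move=> *. nra.
Qed.

Section Vec.
Context {R : realType} {T m : nat} {n : 'I_T -> nat}.
Implicit Types (A : forall t : 'I_T, 'M[R]_(m, n t)) (x : forall t : 'I_T, 'cV[R]_(n t)).

Lemma Ax_entry A x i : Ax A x i 0 = \sum_t (A t *m x t) i 0.
Proof. by rewrite /Ax summxE. Qed.

Lemma Axneq A x t : Ax_neq A x t = Ax A x - A t *m x t.
Proof. by rewrite /Ax_neq /Ax [in RHS](bigD1 t) //= addrAC subrr add0r. Qed.

Lemma sqnorm_ge0 k (w : 'cV[R]_k) : 0 <= sqnorm w.
Proof. by apply: sumr_ge0 => i _; exact: sqr_ge0. Qed.

Lemma Phi_split (f : forall t : 'I_T, 'cV[R]_(n t) -> R) A (b : 'cV[R]_m)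
  (rho theta tau_x tau_z : R) x (z lam : 'cV[R]_m) xh (zh : 'cV[R]_m) :
  Phi f A b rho theta tau_x tau_z x z lam xh zh =
  \sum_t f t (x t) + \sum_t tau_x / 4 * sqnorm (A t *m (x t - xh t))
  + \sum_i gE rho theta tau_z (z i 0) (lam i 0) (Ax A x i 0) (b i 0) (zh i 0).
Proof.
have E : \sum_i gE rho theta tau_z (z i 0) (lam i 0) (Ax A x i 0) (b i 0) (zh i 0)
  = theta / 2 * sqnorm z + dotv lam (Ax A x + z - b)
    + rho / 2 * sqnorm (Ax A x + z - b) + tau_z / 4 * sqnorm (z - zh).
  rewrite /gE /sqnorm /dotv !mulr_sumr -!big_split /=.
  by apply: eq_bigr => i _; rewrite !mxE.
rewrite E /Phi /Lagr; lra.
Qed.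

Lemma xsub_expand (f : forall t : 'I_T, 'cV[R]_(n t) -> R) A (b : 'cV[R]_m)
  (rho tau_x : R) xp (zp lp : 'cV[R]_m) t (y : 'cV[R]_(n t)) :
  xsub f A b rho tau_x xp zp lp t y =
  f t y + \sum_i (lp i 0 * (A t *m y) i 0
     + rho / 2 * ((A t *m y) i 0 + Ax A xp i 0 - (A t *m xp t) i 0 + zp i 0 - b i 0) ^+ 2
     + tau_x / 2 * ((A t *m y) i 0 - (A t *m xp t) i 0) ^+ 2).
Proof.
rewrite /xsub Axneq mulmxBr /sqnorm /dotv !mulr_sumr -!addrA -!big_split /=.
congr (_ + _); apply: eq_bigr => i _; rewrite !mxE.
by rewrite !addrA.
Qed.
End Vec.
Theorem proposition1 (R : realType) (T m : nat) (n : 'I_T -> nat)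
  (X : forall t : 'I_T, set 'cV[R]_(n t))
  (f : forall t : 'I_T, 'cV[R]_(n t) -> R)
  (A : forall t : 'I_T, 'M[R]_(m, n t)) (b : 'cV[R]_m)
  (rho theta tau_x tau_z : R)
  (xs : nat -> forall t : 'I_T, 'cV[R]_(n t)) (zs lams : nat -> 'cV[R]_m)
  (Phihat : R) :
  (0 < T)%N ->
  (* (A1) *)
  (forall t, X t !=set0 /\ compact (X t)) ->
  (* (A2) *)
  (forall t, C2 (f t)) ->
  (* (A3) A = [A_1 ... A_T] has full row rank *)
  row_free (\mxrow_(t < T) A t) ->
  (* (A4) *)
  (exists x : forall t : 'I_T, 'cV[R]_(n t),
      (forall t, X t (x t)) /\ Ax A x = b) ->
  (* parameters *)
  0 < rho -> 0 < theta -> 0 < tau_x -> 0 < tau_z ->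
  0 < tau_x / 4 - (T%:R - 1) * rho / 2 ->
  0 < tau_z / 4 - 2 * (theta + tau_z) ^+ 2 / rho ->
  (* x^0 in X *)
  (forall t, X t (xs 0%N t)) ->
  (* (i) x-update: feasible local minimizer, no worse than warm start *)
  (forall (k : nat) (t : 'I_T), (1 <= k)%N ->
     X t (xs k t) /\
     (\forall y \near xs k t, X t y ->
        xsub f A b rho tau_x (xs k.-1) (zs k.-1) (lams k.-1) t (xs k t)
        <= xsub f A b rho tau_x (xs k.-1) (zs k.-1) (lams k.-1) t y) /\
     xsub f A b rho tau_x (xs k.-1) (zs k.-1) (lams k.-1) t (xs k t)
     <= xsub f A b rho tau_x (xs k.-1) (zs k.-1) (lams k.-1) t (xs k.-1 t)) ->
  (* (ii) z-update *)
  (forall k : nat, (1 <= k)%N ->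
     zs k = (tau_z + rho + theta)^-1
            *: (tau_z *: zs k.-1 - rho *: (Ax A (xs k) - b) - lams k.-1)) ->
  (* (iii) multiplier update *)
  (forall k : nat, (1 <= k)%N ->
     lams k = lams k.-1 + rho *: (Ax A (xs k) + zs k - b)) ->
  (* Phihat = min_{x in X} sum_t f_t(x_t) *)
  ((exists x : forall t : 'I_T, 'cV[R]_(n t),
      (forall t, X t (x t)) /\ \sum_(t < T) f t (x t) = Phihat) /\
   (forall x : forall t : 'I_T, 'cV[R]_(n t),
      (forall t, X t (x t)) -> Phihat <= \sum_(t < T) f t (x t))) ->
  forall K : nat, (1 <= K)%N ->
  exists j : nat, (1 <= j <= K)%N /\
    enorm (Ax A (xs j) - b)
    <= Num.sqrt (2 * (Phi f A b rho theta tau_x tau_z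
                        (xs 1%N) (zs 1%N) (lams 1%N) (xs 0%N) (zs 0%N)
                      - Phihat) / theta
                 * (1 + 2 * (theta + tau_z) ^+ 2
                        / (K%:R * (tau_z / 4 - 2 * (theta + tau_z) ^+ 2 / rho) * rho))).
Proof.
move=> T0 _ _ _ _ r0 t0 tx0 tz0 hx hz hX0 hi hii hiii [_ hmin] K K1.
have hx' : 0 < tau_x / 4 - (T%:R - 1) * rho / 2 by [].
have zE : forall k i, (1 <= k)%N ->
  (tau_z + rho + theta) * zs k i 0
  = tau_z * zs k.-1 i 0 - rho * (\sum_t (A t *m xs k t) i 0 - b i 0) - lams k.-1 i 0.
  move=> k i k1; rewrite (hii k k1) !mxE -Ax_entry mulrA mulfV ?mul1r //.
  by apply/lt0r_neq0; lra.
have lE : forall k i, (1 <= k)%N ->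
  lams k i 0 = lams k.-1 i 0 + rho * (\sum_t (A t *m xs k t) i 0 + zs k i 0 - b i 0).
  by move=> k i k1; rewrite (hiii k k1) !mxE -Ax_entry.
have LamE : forall k i, (1 <= k)%N ->
  lams k i 0 = - (theta * zs k i 0) - tau_z * (zs k i 0 - zs k.-1 i 0).
  move=> k i k1; have h1 := zE k i k1; have h2 := lE k i k1; lra.
pose Phik k := Phi f A b rho theta tau_x tau_z (xs k) (zs k) (lams k) (xs k.-1) (zs k.-1).
have desc : forall k, (1 <= k)%N -> Phik k.+1 <= Phik k.
  move=> k k1; rewrite /Phik !Phi_split /=.
  have hsum : \sum_t f t (xs k.+1 t)
      + \sum_t \sum_i (lams k i 0 * (A t *m xs k.+1 t) i 0
         + rho / 2 * ((A t *m xs k.+1 t) i 0 + Ax A (xs k) i 0 - (A t *m xs k t) i 0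
                      + zs k i 0 - b i 0) ^+ 2
         + tau_x / 2 * ((A t *m xs k.+1 t) i 0 - (A t *m xs k t) i 0) ^+ 2)
    <= \sum_t f t (xs k t)
      + \sum_t \sum_i (lams k i 0 * (A t *m xs k t) i 0
         + rho / 2 * ((A t *m xs k t) i 0 + Ax A (xs k) i 0 - (A t *m xs k t) i 0
                      + zs k i 0 - b i 0) ^+ 2
         + tau_x / 2 * ((A t *m xs k t) i 0 - (A t *m xs k t) i 0) ^+ 2).
    rewrite -!big_split /=; apply: ler_sum => t _.
    have := (hi k.+1 t erefl).2.2; rewrite /= !xsub_expand; exact.
  have hS1 : \sum_t tau_x / 4 * sqnorm (A t *m (xs k.+1 t - xs k t))
     = \sum_i \sum_t tau_x / 4 * ((A t *m xs k.+1 t) i 0 - (A t *m xs k t) i 0) ^+ 2.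
    rewrite exchange_big /=; apply: eq_bigr => t _; rewrite /sqnorm mulr_sumr.
    by apply: eq_bigr => i _; rewrite mulmxBr !mxE.
  have Sold : 0 <= \sum_t tau_x / 4 * sqnorm (A t *m (xs k t - xs k.-1 t)).
    by apply: sumr_ge0 => t _; apply: mulr_ge0; [lra | exact: sqnorm_ge0].
  have key :
      \sum_i \sum_t tau_x / 4 * ((A t *m xs k.+1 t) i 0 - (A t *m xs k t) i 0) ^+ 2
    + \sum_i gE rho theta tau_z (zs k.+1 i 0) (lams k.+1 i 0) (Ax A (xs k.+1) i 0) (b i 0) (zs k i 0)
    + \sum_t \sum_i (lams k i 0 * (A t *m xs k t) i 0
         + rho / 2 * ((A t *m xs k t) i 0 + Ax A (xs k) i 0 - (A t *m xs k t) i 0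
                      + zs k i 0 - b i 0) ^+ 2
         + tau_x / 2 * ((A t *m xs k t) i 0 - (A t *m xs k t) i 0) ^+ 2)
    <= \sum_i gE rho theta tau_z (zs k i 0) (lams k i 0) (Ax A (xs k) i 0) (b i 0) (zs k.-1 i 0)
    + \sum_t \sum_i (lams k i 0 * (A t *m xs k.+1 t) i 0
         + rho / 2 * ((A t *m xs k.+1 t) i 0 + Ax A (xs k) i 0 - (A t *m xs k t) i 0
                      + zs k i 0 - b i 0) ^+ 2
         + tau_x / 2 * ((A t *m xs k.+1 t) i 0 - (A t *m xs k t) i 0) ^+ 2).
    rewrite [X in _ + X <= _]exchange_big [X in _ <= _ + X]exchange_big /=.
    rewrite -!big_split /=; apply: ler_sum => i _.
    rewrite !Ax_entry.
    have H1 := zE k.+1 i erefl; have H3 := lE k.+1 i erefl; rewrite /= in H1 H3.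
    have H2 := LamE k i k1.
    exact: (@per_i _ T (fun t => (A t *m xs k.+1 t) i 0) (fun t => (A t *m xs k t) i 0)
      rho theta tau_x tau_z (zs k i 0) (zs k.-1 i 0) (zs k.+1 i 0) (lams k i 0)
      (lams k.+1 i 0) (b i 0) r0 t0 tz0 hx' hz H1 H2 H3).
  rewrite hS1; lra.
have mono : forall k, (1 <= k)%N -> Phik k <= Phik 1%N.
  elim=> [//|k IH] _.
  case: k IH => [_|k IH]; first by [].
  exact: le_trans (desc k.+1 erefl) (IH erefl).
have lower : forall k, (1 <= k)%N ->
    Phihat + theta / 2 * sqnorm (Ax A (xs k) - b) <= Phik k.
  move=> k k1; rewrite /Phik Phi_split.
  have hf : Phihat <= \sum_t f t (xs k t) by apply: hmin => t; exact: (hi k t k1).1.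
  have hS : 0 <= \sum_t tau_x / 4 * sqnorm (A t *m (xs k t - xs k.-1 t)).
    by apply: sumr_ge0 => t _; apply: mulr_ge0; [lra | exact: sqnorm_ge0].
  have hg : theta / 2 * sqnorm (Ax A (xs k) - b)
    <= \sum_i gE rho theta tau_z (zs k i 0) (lams k i 0) (Ax A (xs k) i 0) (b i 0) (zs k.-1 i 0).
    rewrite /sqnorm mulr_sumr; apply: ler_sum => i _; rewrite !mxE.
    exact: (@lb_ineq _ rho theta tau_z _ _ _ _ _ r0 t0 tz0 hz (LamE k i k1)).
  lra.
exists K; split; first by rewrite K1 leqnn.
have hl := lower K K1; have hm := mono K K1.
have hP1 : Phik 1%N = Phi f A b rho theta tau_x tau_z (xs 1%N) (zs 1%N) (lams 1%N) (xs 0%N) (zs 0%N) by [].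
rewrite hP1 in hm.
rewrite /enorm; apply: ler_wsqrtr.
set P1 := Phi _ _ _ _ _ _ _ _ _ _ _ _ in hm *.
set S := sqnorm _ in hl *.
have S0 : 0 <= S by exact: sqnorm_ge0.
set M := 2 * (theta + tau_z) ^+ 2 / _.
have M0 : 0 <= M.
  apply: divr_ge0; first by apply: mulr_ge0 => //; exact: sqr_ge0.
  apply: mulr_ge0; [apply: mulr_ge0; [exact: ler0n | lra] | lra].
have hW : S <= 2 * (P1 - Phihat) / theta.
  rewrite ler_pdivlMr //; lra.
have W0 : 0 <= 2 * (P1 - Phihat) / theta by exact: le_trans S0 hW.
apply: (le_trans hW); rewrite -[X in X <= _]mulr1; apply: ler_wpM2l => //; lra.
Qed.
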